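(* $\mathrm T_s(\mathbb F) \not\subseteq \mathsf{AC}^0$. In particular, the language $\mathrm{MAJ}=\{w\in\{0,1\}^+ : \#_1(w) > \#_0(w)\}$, where $\#_\sigma(w)$ is the number of occurrences of $\sigma$ in $w$, is recognized by a transformer over floats with saturated attention and size-preserving embedding and activation functions, yet is not in $\mathsf{AC}^0$.
   Context: Datatypes. All values are binary strings. A float is a rational number whose denominator is a power of $2$, encoded as a sign bit together with a pair $\langle p,q\rangle$ of unsigned binary integers (value $(2s-1)p/q$, $q$ a power of $2$); addition and multiplication are exact rational operations (which yield floats). Division is implemented via an approximate inverse: for an integer $p$, $p^{-1}$ has numerator $\lfloor 2^{|p|}/p\rfloor$ and denominator $2^{|p|}$; dividing by a float $\langle p,q\rangle$ multiplies by numerator $\lfloor 2^{|p|}/p\rfloor\cdot q$ over denominator $2^{|p|}$. The size $|x|$ of a value is its length in bits. A function $f$ on bitstrings is size-preserving if there are constants $c,N$ with $|f(x)|\le c|x|$ whenever $|x|\ge N$; $\mathcal S$ is the set of such functions. Saturated attention: for $a\in\mathbb D^n$, $\mathcal M(a)=\{i:a_i=\max_j a_j\}$, $s(a)_j=1/|\mathcal M(a)|$ for $j\in\mathcal M(a)$, else $0$. Transformer over datatype $\mathbb D$ with alphabet $\Sigma$, dimension $k$, $L$ layers, $H$ heads: embedding $\phi:\Sigma\times\mathbb N\to\mathbb D^k$ in $\mathcal S$, scoring functions $s_{\ell,h}:\mathbb D^k\times\mathbb D^k\to\mathbb D$, activation functions $f_\ell\in\mathcal S$. On $w\in\Sigma^n$: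 $v_{0,i}=\phi(w_i,i)$; $a_{\ell,h,i,j}=s_{\ell,h}(v_{\ell,i},v_{\ell,j})$; $b_{\ell+1,h,i}=\sum_j\alpha(a_{\ell,h,i,\cdot})_j v_{\ell,j}$ (arithmetic in $\mathbb D$); $v_{\ell+1,i}=f_{\ell+1}(v_{\ell,i},b_{\ell+1,1,i},\dots,b_{\ell+1,H,i})$. It recognizes $L$ if for a rational affine map $W,b$: $W v_{L,1}(w)+b>0\iff w\in L$. $\mathrm T_\alpha(\mathbb D)$ is the class of languages so recognized with attention $\alpha$, datatype $\mathbb D$, some $k$, and embedding/activation functions in $\mathcal S$. $\mathsf{AC}^0$ is the class of languages $L\subseteq\{0,1\}^*$ recognized by a (non-uniform) family of circuits $\{C_n\}$, with unbounded fan-in AND/OR gates (inputs are the bits and their negations), polynomial size and constant depth, where $C_{|w|}(w)=1\iff w\in L$. *)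

(* Defs.v *)
From HB Require Import structures.
From mathcomp Require Import all_boot all_order all_algebra.
Set Implicit Arguments. Unset Strict Implicit. Unset Printing Implicit Defensive.
Import Order.TTheory GRing.Theory Num.Theory.
Local Open Scope nat_scope.

(* Bit length of an unsigned binary integer (|0| = 1, i.e. the string "0"). *)
Definition bitlen (n : nat) : nat := (trunc_log 2 n).+1.

(* Floats: sign bit s, unsigned integers p and q = 2^e; value (2s-1) p / q. *)
Record float := Float { fsgn : bool; fnum : nat; fexp : nat }.

Definition fden (x : float) : nat := 2 ^ fexp x.

Definition fval (x : float) : rat :=
  ((if fsgn x then 1 else -1) * (fnum x)%:R / (fden x)%:R)%R.

Definition fsize (x : float) : nat := 1 + bitlen (fnum x) + bitlen (fden x).

Definition fint (x : float) : int :=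
  if fsgn x then Posz (fnum x) else (- Posz (fnum x))%R.

Definition fzero : float := Float true 0 0.

Definition fmul (x y : float) : float :=
  Float (fsgn x == fsgn y) (fnum x * fnum y) (fexp x + fexp y).

Definition fadd (x y : float) : float :=
  let e := maxn (fexp x) (fexp y) in
  let z := (fint x * Posz (2 ^ (e - fexp x)) + fint y * Posz (2 ^ (e - fexp y)))%R in
  Float (0 <= z)%R (absz z) e.

Definition finv_nat (m : nat) : float :=
  Float true (2 ^ bitlen m %/ m) (bitlen m).

Definition vecF (k : nat) := 'I_k -> float.

Definition vsize (k : nat) (v : vecF k) : nat := \sum_(c < k) fsize (v c).

Definition size_preserving (A B : Type) (sA : A -> nat) (sB : B -> nat)
  (f : A -> B) : Prop :=
  exists c N : nat, forall x : A, N <= sA x -> sB (f x) <= c * sA x.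

Definition sat_max_set (n : nat) (a : 'I_n -> float) : {set 'I_n} :=
  [set j | [forall j', (fval (a j') <= fval (a j))%R]].

Definition sat_weight (n : nat) (a : 'I_n -> float) (j : 'I_n) : float :=
  if j \in sat_max_set a then finv_nat #|sat_max_set a| else fzero.

Definition attn_sum (n k : nat) (a : 'I_n -> float) (v : 'I_n -> vecF k)
  : vecF k :=
  fun c => foldl fadd fzero [seq fmul (sat_weight a j) (v j c) | j <- enum 'I_n].

Definition layer (n k H : nat) (score : 'I_H -> vecF k -> vecF k -> float)
  (f : vecF k -> ('I_H -> vecF k) -> vecF k) (v : 'I_n -> vecF k)
  : 'I_n -> vecF k :=
  fun i => f (v i) (fun h => attn_sum (fun j => score h (v i) (v j)) v).

(* v_{l,i}: layer l (l = 0 is the embedding); positions are 1-based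
   (position i+1 for the ordinal i), so v_{L,1} is at ordinal ord0. *)
Fixpoint run (Sigma : Type) (k H : nat) (phi : Sigma -> nat -> vecF k)
  (score : nat -> 'I_H -> vecF k -> vecF k -> float)
  (act : nat -> vecF k -> ('I_H -> vecF k) -> vecF k)
  (n : nat) (w : n.-tuple Sigma) (l : nat) : 'I_n -> vecF k :=
  match l with
  | 0 => fun i => phi (tnth w i) i.+1
  | l'.+1 => layer (score l') (act l) (run phi score act w l')
  end.

Definition emb_in_size (Sigma : Type) (x : Sigma * nat) : nat := 1 + bitlen x.2.

Definition act_in_size (k H : nat) (x : vecF k * ('I_H -> vecF k)) : nat :=
  vsize x.1 + \sum_(h < H) vsize (x.2 h).

(* Layer l (0 <= l < L) uses scoring functions score l h and activation
   act (l+1). *)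
Definition T_sat_float (Sigma : Type) (Lang : seq Sigma -> Prop) : Prop :=
  exists (k L H : nat) (phi : Sigma -> nat -> vecF k)
         (score : nat -> 'I_H -> vecF k -> vecF k -> float)
         (act : nat -> vecF k -> ('I_H -> vecF k) -> vecF k)
         (W : 'I_k -> rat) (b : rat),
    size_preserving (@emb_in_size Sigma) (@vsize k)
      (fun x : Sigma * nat => phi x.1 x.2) /\
    (forall l, 1 <= l <= L ->
       size_preserving (@act_in_size k H) (@vsize k)
         (fun x : vecF k * ('I_H -> vecF k) => act l x.1 x.2)) /\
    (forall (m : nat) (w : m.+1.-tuple Sigma),
       (0 < \sum_(c < k) W c * fval (run phi score act w L ord0 c) + b)%R
       <-> Lang w).

Inductive wire := Lit of nat & bool   (* Lit i true = x_i, Lit i false = ~x_i *)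
                | Gt of nat.          (* output of an earlier gate *)

Record gate := Gate { gand : bool (* true = AND, false = OR *);
                      ginputs : seq wire }.

Definition circuit := seq gate.

Definition eval_wire (w : seq bool) (vals : seq bool) (x : wire) : bool :=
  match x with
  | Lit i pos => if pos then nth false w i else ~~ nth false w i
  | Gt j => nth false vals j
  end.

Definition eval_gate (w : seq bool) (vals : seq bool) (g : gate) : bool :=
  if gand g then all (eval_wire w vals) (ginputs g)
  else has (eval_wire w vals) (ginputs g).

Definition circuit_vals (w : seq bool) (C : circuit) : seq bool :=
  foldl (fun vals g => rcons vals (eval_gate w vals g)) [::] C.

Definition circuit_out (w : seq bool) (C : circuit) : bool :=
  last false (circuit_vals w C).

Definition wire_depth (ds : seq nat) (x : wire) : nat :=
  match x with Lit _ _ => 0 | Gt j => nth 0 ds j end.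

Definition gate_depths (C : circuit) : seq nat :=
  foldl (fun ds g => rcons ds (\max_(x <- ginputs g) wire_depth ds x).+1) [::] C.

Definition circuit_depth (C : circuit) : nat := \max_(d <- gate_depths C) d.

Definition circuit_size (C : circuit) : nat := size C.

Definition wf_wire (n t : nat) (x : wire) : bool :=
  match x with Lit i _ => i < n | Gt j => j < t end.

Definition wf_circuit (n : nat) (C : circuit) : bool :=
  all (fun t => all (wf_wire n t) (ginputs (nth (Gate true [::]) C t)))
      (iota 0 (size C)).

Definition AC0 (Lang : seq bool -> Prop) : Prop :=
  exists (C : nat -> circuit) (c d : nat),
    forall n : nat,
      [/\ wf_circuit n (C n),
          circuit_size (C n) <= c * n ^ c + c,
          circuit_depth (C n) <= d &
          forall w : seq bool, size w = n -> (circuit_out w (C n) <-> Lang w)].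

(* MAJ = { w in {0,1}^+ : #_1(w) > #_0(w) } ;  true = 1, false = 0 *)
Definition MAJ (w : seq bool) : Prop :=
  0 < size w /\ count_mem false w < count_mem true w.

(* Main.v *)
Require Import Defs.
From mathcomp Require Import all_boot all_order all_algebra.
From mathcomp Require Import zify ring.
Set Implicit Arguments. Unset Strict Implicit. Unset Printing Implicit Defensive.
Import Order.TTheory GRing.Theory Num.Theory.

Module Part1.

Local Open Scope ring_scope.

Section Poly.
Variable n : nat.
Local Notation X := {set 'I_n}.
Local Notation F := 'Z_3.
Implicit Types S T U x a : X.

Definition yv (x : X) (i : 'I_n) : F := 1 + (i \in x)%:R.
Definition chi (S x : X) : F := \prod_(i < n) (if i \in S then yv x i else 1).
Definition sdiff (S T : X) : X := [set i | (i \in S) != (i \in T)].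

Lemma yv2 x i : yv x i * yv x i = 1.
Proof. by rewrite /yv; case: (i \in x); apply/val_inj. Qed.

Lemma chiM S T x : chi S x * chi T x = chi (sdiff S T) x.
Proof.
rewrite /chi -big_split; apply: eq_bigr => i _; rewrite inE.
by case: (i \in S); case: (i \in T); rewrite /= ?mulr1 ?mul1r ?yv2.
Qed.

Lemma sdiffK S T : sdiff S (sdiff S T) = T.
Proof. by apply/setP => i; rewrite !inE; case: (i \in S); case: (i \in T). Qed.

Lemma card_sdiff (S U : X) : (#|U| <= #|S| + #|sdiff S U|)%N.
Proof.
apply: (leq_trans (subset_leq_card (_ : U \subset S :|: sdiff S U))).
  by apply/subsetP => i iU; rewrite !inE iU; case: (i \in S).
by rewrite cardsU leq_subr.
Qed.

Definition poly_le (e : nat) (f : X -> F) : Prop :=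
  exists c : X -> F, (forall S : X, (e < #|S|)%N -> c S = 0) /\
                     forall x, f x = \sum_(S : X) c S * chi S x.

Lemma poly_mono e1 e2 f : (e1 <= e2)%N -> poly_le e1 f -> poly_le e2 f.
Proof.
move=> le [c [c0 fE]]; exists c; split=> // S lt; apply: c0.
exact: leq_ltn_trans lt.
Qed.

Lemma poly_ext e f g : f =1 g -> poly_le e f -> poly_le e g.
Proof. by move=> fg [c [c0 fE]]; exists c; split=> // x; rewrite -fg. Qed.

Lemma poly_chi S : poly_le #|S| (chi S).
Proof.
exists (fun T => if T == S then 1 else 0); split.
  by move=> T lt; case: eqP lt => // ->; rewrite ltnn.
move=> x; rewrite (bigD1 S) //= eqxx mul1r big1 ?addr0 // => T /negbTE ->.
by rewrite mul0r.
Qed.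

Lemma chi0 x : chi set0 x = 1.
Proof. by rewrite /chi big1 // => i _; rewrite in_set0. Qed.

Lemma chi1 i x : chi [set i] x = yv x i.
Proof.
rewrite /chi (bigD1 i) //= in_set1 eqxx big1 ?mulr1 // => j /negbTE ji.
by rewrite in_set1 ji.
Qed.

Lemma poly_const (a : F) : poly_le 0 (fun _ => a).
Proof.
exists (fun T => if T == set0 then a else 0); split.
  by move=> T lt; case: eqP lt => // ->; rewrite cards0.
move=> x; rewrite (bigD1 set0) //= eqxx chi0 mulr1 big1 ?addr0 // => T /negbTE ->.
by rewrite mul0r.
Qed.

Lemma poly_add e f g : poly_le e f -> poly_le e g -> poly_le e (fun x => f x + g x).
Proof.
move=> [c [c0 fE]] [d [d0 gE]]; exists (fun S => c S + d S); split.
  by move=> S lt; rewrite c0 ?d0 ?addr0.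
by move=> x; rewrite fE gE -big_split; apply: eq_bigr => S _; rewrite mulrDl.
Qed.

Lemma poly_scale e (a : F) f : poly_le e f -> poly_le e (fun x => a * f x).
Proof.
move=> [c [c0 fE]]; exists (fun S => a * c S); split.
  by move=> S lt; rewrite c0 ?mulr0.
by move=> x; rewrite fE mulr_sumr; apply: eq_bigr => S _; rewrite mulrA.
Qed.

Lemma poly_mul e1 e2 f g : poly_le e1 f -> poly_le e2 g ->
  poly_le (e1 + e2) (fun x => f x * g x).
Proof.
move=> [c [c0 fE]] [d [d0 gE]].
exists (fun U => \sum_S c S * d (sdiff S U)); split.
  move=> U lt; apply: big1 => S _.
  case: (leqP #|S| e1) => hS; last by rewrite c0 ?mul0r.
  rewrite d0 ?mulr0 //; have := card_sdiff S U; lia.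
move=> x; rewrite fE gE mulr_suml.
under eq_bigr => S _ do rewrite mulr_sumr.
under eq_bigr => S _ do under eq_bigr => T _ do rewrite mulrACA chiM.
under eq_bigr => S _ do rewrite (reindex_inj (can_inj (sdiffK S))) /=.
rewrite exchange_big /=; apply: eq_bigr => U _; rewrite mulr_suml.
by apply: eq_bigr => S _; rewrite sdiffK.
Qed.

Lemma poly_sum e (I : Type) (r : seq I) (P : pred I) (G : I -> X -> F) :
  (forall i, poly_le e (G i)) -> poly_le e (fun x => \sum_(i <- r | P i) G i x).
Proof.
move=> HG; elim: r => [|a r IH].
  by apply: poly_ext (poly_mono (leq0n e) (poly_const 0)) => x; rewrite big_nil.
apply: poly_ext (_ : poly_le e (fun x => (if P a then G a x else 0) + \sum_(i <- r | P i) G i x)).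
  by move=> x; rewrite big_cons; case: (P a); rewrite ?add0r.
apply: poly_add => //; case: (P a) => //.
exact: poly_mono (leq0n e) (poly_const 0).
Qed.

Lemma poly_prod e (I : Type) (r : seq I) (G : I -> X -> F) :
  (forall i, poly_le e (G i)) -> poly_le (size r * e) (fun x => \prod_(i <- r) G i x).
Proof.
move=> HG; elim: r => [|a r IH].
  by apply: poly_ext (poly_const 1) => x; rewrite big_nil.
apply: poly_ext (_ : poly_le _ (fun x => G a x * \prod_(i <- r) G i x)).
  by move=> x; rewrite big_cons.
by rewrite /= mulSn; apply: poly_mul.
Qed.

Lemma poly_prod_ord e k (G : 'I_k -> X -> F) :
  (forall i, poly_le e (G i)) -> poly_le (k * e) (fun x => \prod_(i < k) G i x).
Proof.
elim: k G => [|k IH] G HG.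
  by apply: poly_ext (poly_const 1) => x; rewrite big_ord0.
apply: poly_ext (_ : poly_le _ (fun x => (\prod_(i < k) G (widen_ord (leqnSn k) i) x) * G ord_max x)).
  by move=> x; rewrite big_ord_recr.
by rewrite mulSnr; apply: poly_mul => //; apply: IH.
Qed.

Lemma poly_lit i : poly_le 1 (fun x => (i \in x)%:R).
Proof.
apply: poly_ext (_ : poly_le 1 (fun x => chi [set i] x + (-1))).
  by move=> x; rewrite chi1 /yv; ring.
apply: poly_add; first by have := poly_chi [set i]; rewrite cards1.
exact: poly_mono (poly_const _).
Qed.

Lemma poly_nlit i : poly_le 1 (fun x => 1 - (i \in x)%:R).
Proof.
apply: poly_add; first exact: poly_mono (poly_const _).
by apply: poly_ext (poly_scale (-1) (poly_lit i)) => x; rewrite mulN1r.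
Qed.

Lemma delta_eq a x :
  \prod_(i < n) (if i \in a then (i \in x)%:R else 1 - (i \in x)%:R) = (x == a)%:R :> F.
Proof.
case: eqP => [->|/eqP neq].
  by apply: big1 => i _; case: (i \in a); rewrite ?subr0.
case: (pickP (fun i => (i \in x) != (i \in a))) => [i Hi|H]; last first.
  by case/eqP: neq; apply/setP => i; have := H i; move/negbFE/eqP.
rewrite (bigD1 i) //=; move: Hi.
by case: (i \in a); case: (i \in x) => //= _; rewrite ?subrr mul0r.
Qed.

Lemma poly_full (f : X -> F) : poly_le n f.
Proof.
apply: poly_ext (_ : poly_le n (fun x => \sum_a f a *
   \prod_(i < n) (if i \in a then (i \in x)%:R else 1 - (i \in x)%:R))).
  move=> x; under eq_bigr => a _ do rewrite delta_eq.
  rewrite (bigD1 x) //= eqxx mulr1 big1 ?addr0 // => a /negbTE.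
  by rewrite eq_sym => ->; rewrite mulr0.
apply: poly_sum => a; apply: poly_scale.
apply: poly_mono (_ : (n * 1 <= n)%N) _; first by rewrite muln1.
apply: poly_prod_ord => i.
by case: (i \in a); [exact: poly_lit | exact: poly_nlit].
Qed.

End Poly.
Arguments poly_const {n}.
Arguments poly_chi {n}.
Arguments poly_lit {n}.

End Part1.
Import Part1.

Module Part2.

Lemma card_setT_pow (T : finType) : #|{set T}| = 2 ^ #|T|.
Proof. by have := card_powerset [set: T]; rewrite powersetT !cardsT. Qed.

Lemma averaging (Tt Y : finType) (t0 : Tt) (B : Tt -> Y -> bool) (K : nat) :
  (forall y, #|[pred t | B t y]| * K <= #|Tt|) ->
  exists t, #|[pred y | B t y]| * K <= #|Y|.
Proof.
move=> H; apply/existsP; apply: contraT; rewrite negb_exists => /forallP Hn.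
have H1 : \sum_(t : Tt) (#|Y|).+1 <= \sum_(t : Tt) #|[pred y | B t y]| * K.
  by apply: leq_sum => t _; have := Hn t; rewrite -ltnNge.
have H2 : \sum_(t : Tt) #|[pred y | B t y]| * K = \sum_(y : Y) #|[pred t | B t y]| * K.
  rewrite -!big_distrl /=; congr (_ * _).
  have E : forall (A B : finType) (P : A -> B -> bool) a,
     #|[pred b | P a b]| = \sum_(b : B) (P a b : nat).
    by move=> A B' P a; rewrite -sum1_card big_mkcond /=; apply: eq_bigr => b _; rewrite inE /=; case: (P a b).
  have E' : forall y, #|[pred t | B t y]| = \sum_(t : Tt) (B t y : nat).
    by move=> y; rewrite -sum1_card big_mkcond /=; apply: eq_bigr => b _; rewrite inE /=; case: (B b y).
  under eq_bigr => t _ do rewrite (E _ _ B t).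
  under [RHS]eq_bigr => y _ do rewrite E'.
  by rewrite exchange_big.
have H3 : \sum_(y : Y) #|[pred t | B t y]| * K <= \sum_(y : Y) #|Tt|.
  by apply: leq_sum => y _; apply: H.
move: H1; rewrite H2 => H1; have := leq_trans H1 H3.
rewrite !sum_nat_const !cardT /= -!cardT => h.
have : 0 < #|Tt| by apply/card_gt0P; exists t0.
nia.
Qed.

Local Open Scope ring_scope.

Lemma zero_sets (m : nat) (c : 'I_m -> bool) (j0 : 'I_m) : c j0 ->
  (2 * #|[set T : {set 'I_m} | ((\sum_(j in T) (c j)%:R : 'Z_3) == 0)%R]| <= 2 ^ m)%N.
Proof.
move=> cj0.
set s := fun T : {set 'I_m} => (\sum_(j in T) (c j)%:R : 'Z_3)%R.
set Z := [set T | s T == 0].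
pose h := fun T : {set 'I_m} => if j0 \in T then T :\ j0 else j0 |: T.
have hK : cancel h h.
  move=> T; rewrite /h; case HT: (j0 \in T).
    by rewrite setD11 setD1K.
  by rewrite setU11 setU1K // HT.
have hs : forall T, s T = 1 + s (h T) \/ s (h T) = 1 + s T.
  move=> T; rewrite /h /s; case: ifP => HT.
    by left; rewrite (big_setD1 _ HT) cj0.
  by right; rewrite big_setU1 ?HT // cj0.
have sub : h @: Z \subset ~: Z.
  apply/subsetP => _ /imsetP [T HT ->]; rewrite !inE; move: HT; rewrite inE => /eqP HT.
  have n01 : (0 : 'Z_3) != 1 by [].
  case: (hs T); rewrite HT => E.
    apply/eqP => H0; move: n01; by rewrite E H0 addr0 eqxx.
  by rewrite E addr0 eq_sym.
have := subset_leq_card sub; rewrite card_imset; last exact: can_inj hK.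
have := cardsC Z; rewrite card_setT_pow card_ord => <-.
lia.
Qed.

Lemma gate_choice (m l : nat) (Y : finType) (c : Y -> 'I_m -> bool) :
 exists t : {ffun 'I_l -> {set 'I_m}},
  (#|[pred y | [exists j, c y j] &&
      [forall r, ((\sum_(j in t r) (c y j)%:R : 'Z_3) == 0)%R]]| * 2 ^ l <= #|Y|)%N.
Proof.
apply: (averaging [ffun => set0]) => y.
case: (pickP (c y)) => [j0 cj0|Hn]; last first.
  rewrite (eq_card0 (_ : _ =i pred0)) // => t; rewrite inE /=.
  by apply/negbTE/negP => /andP [/existsP [j]]; rewrite Hn.
set Z := [set T : {set 'I_m} | ((\sum_(j in T) (c y j)%:R : 'Z_3) == 0)%R].
have hz := zero_sets cj0; rewrite -/Z in hz.
rewrite (eq_card (_ : _ =i ffun_on Z)); last first.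
  move=> t; rewrite inE /= (_ : [exists j, c y j] = true); last by apply/existsP; exists j0.
  apply/forallP/familyP => H r; have := H r; by rewrite inE.
rewrite card_ffun_on card_ffun !card_ord card_setT_pow -expnMn.
case: l => [|l]; first by [].
by rewrite card_ord leq_exp2r // mulnC.
Qed.

End Part2.
Import Part2.

Module Part3.

Lemma cvals_rcons w C g : circuit_vals w (rcons C g) =
  rcons (circuit_vals w C) (eval_gate w (circuit_vals w C) g).
Proof. by rewrite /circuit_vals foldl_rcons. Qed.

Lemma size_cvals w C : size (circuit_vals w C) = size C.
Proof. by elim/last_ind: C => // C g IH; rewrite cvals_rcons !size_rcons IH. Qed.

Lemma gdepths_rcons C g : gate_depths (rcons C g) =
  rcons (gate_depths C) (\max_(x <- ginputs g) wire_depth (gate_depths C) x).+1.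
Proof. by rewrite /gate_depths foldl_rcons. Qed.

Lemma size_gdepths C : size (gate_depths C) = size C.
Proof. by elim/last_ind: C => // C g IH; rewrite gdepths_rcons !size_rcons IH. Qed.

Lemma has_ord (T : Type) (x0 : T) (p : pred T) (s : seq T) :
  has p s = [exists j : 'I_(size s), p (nth x0 s j)].
Proof.
apply/(has_nthP x0)/existsP => [[i hi pi]|[j pj]].
  by exists (Ordinal hi).
by exists j.
Qed.

Lemma leq_bigmax_nth (T : Type) (s : seq T) (F : T -> nat) x0 k :
  k < size s -> F (nth x0 s k) <= \max_(x <- s) F x.
Proof.
elim: s k => [|a s IH] [|k] //=; rewrite big_cons.
  by rewrite leq_maxl.
by move=> hk; apply: leq_trans (IH _ hk) (leq_maxr _ _).
Qed.

Local Open Scope ring_scope.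

Lemma sq_nz (a : 'Z_3) : a != 0 -> a ^+ 2 = 1.
Proof. case: a => [[|[|[|]]] //] Ha; try by [].
all: move=> _; apply/val_inj; reflexivity. Qed.

Section Approx.
Variable n : nat.
Local Notation X := {set 'I_n}.
Local Notation F := 'Z_3.
Variable inp : X -> seq bool.
Definition sig i (x : X) : F := (nth false (inp x) i)%:R.
Hypothesis Hinp : forall i, poly_le 1 (sig i).
Variable l : nat.
Hypothesis l0 : (0 < l)%N.

Lemma approx_circuit (C : circuit) : exists (ps : seq (X -> F)) (E : {set X}),
  [/\ size ps = size C, (#|E| * 2 ^ l <= size C * #|X|)%N,
      forall j, (j < size C)%N ->
        poly_le ((2 * l) ^ nth 0 (gate_depths C) j) (nth (fun _ => 0) ps j) &
      forall x, x \notin E -> forall j, (j < size C)%N ->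
          nth (fun _ => 0) ps j x = (nth false (circuit_vals (inp x) C) j)%:R].
Proof.
elim/last_ind: C => [|C g [ps [E [Hs HE Hd Hv]]]].
  by exists [::], set0; split => //; rewrite cards0.
set ds := gate_depths C.
pose wp (w : wire) : X -> F := match w with
  | Lit i pos => if pos then sig i else (fun x => 1 - sig i x)
  | Gt j => nth (fun _ => 0) ps j end.
have wp_val : forall x, x \notin E -> forall w,
    wp w x = (eval_wire (inp x) (circuit_vals (inp x) C) w)%:R.
  move=> x xE [i pos|j] /=.
    by case: pos => //=; rewrite /sig; case: (nth false (inp x) i); rewrite ?subr0 ?subrr.
  case: (ltnP j (size C)) => hj; first exact: Hv.
  by rewrite !nth_default ?size_cvals ?Hs.
have wp_deg : forall w, poly_le ((2 * l) ^ wire_depth ds w) (wp w).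
  move=> [i pos|j] /=.
    rewrite expn0; case: pos; first exact: Hinp.
    apply: poly_add; first exact: poly_mono (leq0n _) (poly_const _).
    by apply: poly_ext (poly_scale (-1) (Hinp i)) => x; rewrite mulN1r.
  case: (ltnP j (size C)) => hj; first exact: Hd.
  by rewrite (@nth_default _ (fun _ : X => 0 : F) ps j) ?Hs //; exact: poly_mono (leq0n _) (poly_const 0).
set ws := ginputs g.
pose w0 := Lit 0 true.
pose c (x : X) (j : 'I_(size ws)) : bool :=
  let b := eval_wire (inp x) (circuit_vals (inp x) C) (nth w0 ws j) in
  if gand g then ~~ b else b.
have [t Ht] := gate_choice l c.
pose q (j : 'I_(size ws)) (x : X) : F :=
  if gand g then 1 - wp (nth w0 ws j) x else wp (nth w0 ws j) x.
pose Z (x : X) : F := \prod_(r < l) (1 - (\sum_(j in t r) q j x) ^+ 2).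
pose pg : X -> F := if gand g then Z else (fun x => 1 - Z x).
exists (rcons ps pg).
exists (E :|: [set x | [exists j, c x j] &&
      [forall r, ((\sum_(j in t r) (c x j)%:R : 'Z_3) == 0)%R]]).
split.
- by rewrite !size_rcons Hs.
- rewrite size_rcons mulSn mulnC.
  apply: leq_trans (_ : (2 ^ l * (#|E| + #|[pred x | [exists j, c x j] &&
      [forall r, ((\sum_(j in t r) (c x j)%:R : 'Z_3) == 0)%R]]|) <= _)%N).
    rewrite leq_mul2l cardsU cardsE leq_subr orbT //.
  by rewrite mulnDr [X in (_ <= X)%N]addnC; apply: leq_add; rewrite mulnC.
- move=> j; rewrite size_rcons ltnS leq_eqVlt => /orP [/eqP ->|hj]; last first.
    by rewrite nth_rcons Hs hj gdepths_rcons nth_rcons size_gdepths hj; apply: Hd.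
  rewrite nth_rcons Hs ltnn eqxx gdepths_rcons nth_rcons size_gdepths ltnn eqxx -/ds.
  set M := \max_(x <- ws) wire_depth ds x.
  have l2 : (0 < 2 * l)%N by rewrite muln_gt0 l0.
  have qdeg : forall j, poly_le ((2 * l) ^ M) (q j).
    move=> k; have hw : poly_le ((2 * l) ^ M) (wp (nth w0 ws k)).
      apply: poly_mono (wp_deg _); apply: leq_pexp2l => //.
      exact: leq_bigmax_nth.
    rewrite /q; case: (gand g) => //.
    apply: poly_add; first exact: poly_mono (leq0n _) (poly_const _).
    by apply: poly_ext (poly_scale (-1) hw) => x; rewrite mulN1r.
  have Zdeg : poly_le ((2 * l) ^ M.+1) Z.
    have -> : ((2 * l) ^ M.+1 = l * ((2 * l) ^ M + (2 * l) ^ M))%N.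
      by rewrite expnS addnn -mul2n mulnA (mulnC l 2).
    apply: poly_prod_ord => r.
    apply: poly_add; first exact: poly_mono (leq0n _) (poly_const _).
    apply: poly_ext (poly_scale (-1) (poly_mul (poly_sum _ _ qdeg) (poly_sum _ _ qdeg))) => x.
    by rewrite mulN1r expr2.
  rewrite /pg; case: (gand g) => //.
  apply: poly_add; first exact: poly_mono (leq0n _) (poly_const _).
  by apply: poly_ext (poly_scale (-1) Zdeg) => x; rewrite mulN1r.
- move=> x; rewrite inE negb_or => /andP [xE xB] j.
  rewrite size_rcons ltnS leq_eqVlt => /orP [/eqP ->|hj]; last first.
    by rewrite nth_rcons Hs hj cvals_rcons nth_rcons size_cvals hj; apply: Hv.
  rewrite nth_rcons Hs ltnn eqxx cvals_rcons nth_rcons size_cvals ltnn eqxx.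
  have qv : forall k, q k x = (c x k)%:R.
    move=> k; rewrite /q /c wp_val //.
    by case: (gand g); case: eval_wire; rewrite ?subrr ?subr0.
  have Zv : Z x = (~~ [exists k, c x k])%:R.
    rewrite /Z; under eq_bigr => r _ do under eq_bigr => k _ do rewrite qv.
    case: (boolP [exists k, c x k]) => hex.
      move: xB; rewrite inE hex /= negb_forall => /existsP [r hr].
      by rewrite (bigD1 r) //= sq_nz // subrr mul0r.
    apply: big1 => r _; rewrite big1 ?expr0n ?subr0 //.
    move=> k _; move: hex; rewrite negb_exists => /forallP /(_ k).
    by case: (c x k).
  move: Zv; rewrite /pg /eval_gate -[all _ _]negbK -has_predC !(has_ord w0) -/ws /c.
  case: (gand g) => /= ->.
    by [].
  by case: [exists _, _]; rewrite /= ?subrr ?subr0.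
Qed.

Lemma approx_out C d : (circuit_depth C <= d)%N ->
  exists (p : X -> F) (E : {set X}),
  [/\ poly_le ((2 * l) ^ d) p, (#|E| * 2 ^ l <= size C * #|X|)%N &
      forall x, x \notin E -> p x = (circuit_out (inp x) C)%:R].
Proof.
move=> hd; have [ps [E [Hs HE Hd Hv]]] := approx_circuit C.
case: (posnP (size C)) => hC.
  exists (fun _ => 0), set0; split.
  - exact: poly_mono (leq0n _) (poly_const 0).
  - by rewrite cards0.
  - move=> x _; rewrite /circuit_out.
    by have := size_cvals (inp x) C; rewrite hC => /size0nil ->.
exists (nth (fun _ => 0) ps (size C).-1), E; split => //.
- apply: poly_mono (Hd _ _); last by rewrite prednK.
  apply: leq_pexp2l; first by rewrite muln_gt0 l0.
  apply: leq_trans hd; rewrite /circuit_depth.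
  apply: (leq_bigmax_nth id 0%N); rewrite size_gdepths prednK //.
- move=> x xE; rewrite /circuit_out -nth_last size_cvals; apply: Hv => //.
  by rewrite prednK.
Qed.

End Approx.

End Part3.
Import Part3.

Module Part4.

Definition Aset N e := [set S : {set 'I_N} | #|S| <= e].

Lemma Aset_succ N e : #|Aset N e.+1| <= #|Aset N e| + 'C(N, e.+1).
Proof.
have := card_draws ('I_N) e.+1; rewrite card_ord => <-.
apply: leq_trans (leq_card_setU _ _); apply: subset_leq_card.
by apply/subsetP => S; rewrite !inE leq_eqVlt ltnS orbC.
Qed.

Lemma bin_unimodal m i : 'C(m.*2, m + i) <= 'C(m.*2, m).
Proof.
elim: i => [|i IH]; first by rewrite addn0.
apply: leq_trans IH; rewrite addnS.
have H := mul_bin_left m.*2 (m + i).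
have : (m + i).+1 * 'C(m.*2, (m + i).+1) <= (m + i).+1 * 'C(m.*2, m + i).
  rewrite H leq_mul2r; apply/orP; right; rewrite -addnn; lia.
by rewrite leq_mul2l.
Qed.

Lemma Aset_bound m D : #|Aset m.*2 (m + D)| <= #|Aset m.*2 m| + D * 'C(m.*2, m).
Proof.
elim: D => [|D IH]; first by rewrite addn0 mul0n addn0.
rewrite addnS; apply: leq_trans (Aset_succ _ _) _; rewrite mulSn.
have := bin_unimodal m D.+1; rewrite addnS.
lia.
Qed.

Lemma Aset_half m : 2 * #|Aset m.*2 m| = 2 ^ m.*2 + 'C(m.*2, m).
Proof.
set A := Aset m.*2 m.
set B := [set S : {set 'I_m.*2} | m <= #|S|].
have cAB : #|B| = #|A|.
  have -> : B = [set ~: S | S in A].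
    apply/setP => S; rewrite !inE; apply/idP/imsetP => [h|[T hT ->]].
      exists (~: S); last by rewrite setCK.
      rewrite inE; have := cardsC S; rewrite card_ord; lia.
    move: hT; rewrite inE; have := cardsC T; rewrite card_ord; lia.
  by rewrite card_imset //; apply: inv_inj setCK.
have U : A :|: B = setT by apply/setP => S; rewrite !inE; lia.
have I : A :&: B = [set S : {set 'I_m.*2} | #|S| == m].
  by apply/setP => S; rewrite !inE; lia.
have := cardsUI A B; rewrite U I card_draws cardsT card_setT_pow card_ord cAB.
lia.
Qed.

Lemma central_bin m : 'C(m.*2, m) ^ 2 * m.*2.+1 <= 16 ^ m.
Proof.
elim: m => [|m IH]; first by [].
set B := 'C(m.*2, m); set B' := 'C(m.+1.*2, m.+1).
set X1 := 'C(m.*2.+1, m.+1).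
have e1 : m.*2.+1 * B = m.+1 * X1 by have := mul_bin_diag m.*2.+1 m.
have e2 : m.*2.+2 * X1 = m.+1 * B'.
  have := mul_bin_down m.+1.*2 m.+1; rewrite doubleS /= => ->.
  congr (_ * _); rewrite -addnn; lia.
have h1 : m.+1 * B' = 2 * (m.*2.+1 * B).
  rewrite -e2 e1 -addnn; ring.
have h2 : (m.+1 ^ 2 * (B' ^ 2 * m.+1.*2.+1) =
          4 * (m.*2.+1 * m.*2.+3) * (B ^ 2 * m.*2.+1)).
  have -> : m.+1 ^ 2 * (B' ^ 2 * m.+1.*2.+1) = (m.+1 * B') ^ 2 * m.+1.*2.+1.
    by rewrite expnMn mulnA.
  rewrite h1 doubleS; ring.
have h3 : (m.*2.+1 * m.*2.+3) <= 4 * m.+1 ^ 2 by rewrite -addnn; nia.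
have : m.+1 ^ 2 * (B' ^ 2 * m.+1.*2.+1) <= m.+1 ^ 2 * 16 ^ m.+1.
  rewrite h2 (expnS 16) [X in _ <= X]mulnA; apply: leq_mul => //.
  apply: leq_trans (_ : 4 * (4 * m.+1 ^ 2) <= _); first exact: leq_mul (leqnn 4) h3.
  by rewrite mulnA mulnC.
by rewrite leq_mul2l.
Qed.

End Part4.
Import Part4.

Module Part5.

Local Open Scope ring_scope.

Lemma count_G N (G : {set {set 'I_N}}) e :
  (forall f : {set 'I_N} -> 'Z_3, exists g, poly_le e g /\ forall x, x \in G -> g x = f x) ->
  (#|G| <= #|Aset N e|)%N.
Proof.
move=> H.
pose Phi (c : {ffun {S : {set 'I_N} | S \in Aset N e} -> 'Z_3}) :
    {ffun {x : {set 'I_N} | x \in G} -> 'Z_3} :=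
  [ffun y => \sum_(S : {S : {set 'I_N} | S \in Aset N e}) c S * chi (val S) (val y)].
have surj : forall h, exists c, Phi c = h.
  move=> h.
  pose f (x : {set 'I_N}) := if @insub _ (fun x => x \in G) _ x is Some y then h y else 0.
  have [g [[cg [cg0 gE]] gf]] := H f.
  exists [ffun S => cg (val S)].
  apply/ffunP => y; rewrite !ffunE.
  transitivity (\sum_(S in Aset N e) cg S * chi S (val y)).
    by rewrite [RHS]big_sub /=; apply: eq_bigr => S _; rewrite ffunE.
  rewrite big_mkcond /=.
  transitivity (g (val y)); last by rewrite gf ?(valP y) // /f valK.
  rewrite gE; apply: eq_bigr => S _; rewrite inE; case: leqP => // hS.
  by rewrite cg0 ?mul0r.
have : (#|[set: {ffun {x : {set 'I_N} | x \in G} -> 'Z_3}]| <=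
        #|Phi @: [set: {ffun {S : {set 'I_N} | S \in Aset N e} -> 'Z_3}]|)%N.
  apply: subset_leq_card; apply/subsetP => h _.
  by have [c <-] := surj h; apply: imset_f; rewrite inE.
move/leq_trans/(_ (leq_imset_card _ _)).
rewrite !cardsT !card_ffun !card_sig card_ord leq_exp2l //.
Qed.

Lemma chiT_val N (x : {set 'I_N}) : chi setT x = (-1) ^+ #|x| :> 'Z_3.
Proof.
rewrite /chi; under eq_bigr => i _ do rewrite in_setT /yv.
rewrite -prodr_const [RHS]big_mkcond /=; apply: eq_bigr => i _.
by case: (i \in x) => //; apply/val_inj.
Qed.

Lemma represent N m D (G : {set {set 'I_N}}) (Q : {set 'I_N} -> 'Z_3) :
  N = m.*2 -> poly_le D Q -> (forall x, x \in G -> chi setT x = Q x) ->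
  forall f : {set 'I_N} -> 'Z_3,
    exists g, poly_le (m + D) g /\ forall x, x \in G -> g x = f x.
Proof.
move=> hN hQ hG f; have [c [_ fE]] := poly_full f.
exists (fun x => \sum_S c S * (if (#|S| <= m)%N then chi S x else Q x * chi (~: S) x)).
split.
- apply: poly_sum => S; apply: poly_scale; case: leqP => hS.
    by apply: poly_mono (poly_chi S); apply: leq_trans hS (leq_addr _ _).
  apply: poly_mono (poly_mul hQ (poly_chi (~: S))).
  have := cardsC S; rewrite card_ord; have : N = (m + m)%N by rewrite hN addnn. lia.
- move=> x xG; rewrite fE; apply: eq_bigr => S _; case: leqP => // _.
  rewrite -hG // chiM (_ : sdiff setT (~: S) = S) //.
  by apply/setP => i; rewrite /sdiff !inE; case: (i \in S).
Qed.

Lemma alt_sum N w : (w <= N)%N ->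
  1 + \sum_(k < N) 2 * (-1) ^+ k.+1 * (k < w)%:R = (-1) ^+ w :> 'Z_3.
Proof.
move=> hw; rewrite -(big_mkord xpredT (fun k => 2 * (-1) ^+ k.+1 * (k < w)%:R)).
rewrite (telescope_sumr_eq (fun j => (-1) ^+ minn j w)) //.
  by rewrite (minn_idPr hw) min0n expr0 addrC subrK.
move=> k _; case: (ltnP k w) => hk.
  rewrite (minn_idPl hk) exprS /=; ring.
by rewrite (minn_idPr (leqW hk)) subrr mulr0.
Qed.

End Part5.
Import Part5.

Module Part6.

Lemma poly_vs_exp A B : exists l, 0 < l /\ A * (2 * l) ^ B <= 2 ^ l.
Proof.
set b := A + 3 * B + 1.
exists (2 ^ (b + b)); split; first by rewrite expn_gt0.
rewrite -expnS -expnM.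
have hA : A <= 2 ^ A by apply: ltnW; apply: ltn_expl.
apply: leq_trans (_ : 2 ^ A * 2 ^ ((b + b).+1 * B) <= _).
  by rewrite leq_mul2r hA orbT.
rewrite -expnD leq_exp2l //.
have hb : b < 2 ^ b by apply: ltn_expl.
have : b * b <= 2 ^ b * 2 ^ b by apply: leq_mul; apply: ltnW.
rewrite -expnD.
have : A + 3 * B + 1 <= b by [].
nia.
Qed.

Lemma params c d : exists l, 0 < l /\
  8 * (64 * ((2 * l) ^ d) ^ 2) * (c * (2 * (64 * ((2 * l) ^ d) ^ 2)) ^ c + c) <= 2 ^ l.
Proof.
have [l [l0 hl]] := poly_vs_exp (1024 * c * 128 ^ c) (d * (2 + 2 * c)).
exists l; split => //; apply: leq_trans hl.
set P := (2 * l) ^ d.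
have P1 : 0 < P by rewrite expn_gt0 muln_gt0 l0.
have e1 : (2 * l) ^ (d * (2 + 2 * c)) = P ^ 2 * (P ^ 2) ^ c.
  by rewrite -expnM -expnD /P -expnM.
rewrite e1.
have e2 : (2 * (64 * P ^ 2)) ^ c = 128 ^ c * (P ^ 2) ^ c by rewrite mulnA -expnMn.
rewrite e2.
have h1 : 0 < (P ^ 2) ^ c by rewrite !expn_gt0 /P ?expn_gt0 ?muln_gt0 ?l0 ?orbT.
have h2 : 0 < 128 ^ c by rewrite expn_gt0.
set u := (P ^ 2) ^ c; set v := 128 ^ c; set w := P ^ 2.
nia.
Qed.

Lemma card_count N (x : {set 'I_N}) : count (fun i => i \in x) (enum 'I_N) = #|x|.
Proof.
rewrite cardE -size_filter /enum_mem -filter_predI; congr size.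
by apply: eq_filter => i /=; rewrite andbT.
Qed.

Definition inp N (k : nat) (x : {set 'I_N}) : seq bool :=
  [seq i \in x | i <- enum 'I_N] ++ nseq (N - k) true ++ nseq k false.
Arguments inp : clear implicits.

Lemma inp_size N k (x : {set 'I_N}) : k <= N -> size (inp N k x) = N + N.
Proof. by rewrite /inp !size_cat size_map size_enum_ord !size_nseq; lia. Qed.

Lemma inp_maj N k (x : {set 'I_N}) : k < N -> (MAJ (inp N k x) <-> k < #|x|).
Proof.
move=> hk; rewrite /MAJ inp_size ?(ltnW hk) //.
have ht : count_mem true (inp N k x) = #|x| + (N - k).
  rewrite /inp !count_cat count_map !count_nseq /= mul0n addn0 mul1n -card_count.
  by congr (_ + _); apply: eq_count => i /=; rewrite eqb_id.
have hf : count_mem false (inp N k x) = (N - #|x|) + k.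
  rewrite /inp !count_cat count_map !count_nseq /= mul0n add0n mul1n.
  congr (_ + _).
  have -> : count (preim (fun i => i \in x) (pred1 false)) (enum 'I_N) = #|~: x|.
    by rewrite -card_count; apply: eq_count => i /=; rewrite inE; case: (i \in x).
  have h := cardsC x; rewrite card_ord in h; have hm := max_card x; rewrite card_ord in hm.
  by apply: (@addnI #|x|); rewrite h subnKC.
rewrite ht hf; have := max_card x; rewrite card_ord => hx.
split; first by case=> _ h; lia.
move=> h; split; lia.
Qed.

Local Open Scope ring_scope.

Lemma inp_poly N k i : poly_le 1 (sig (inp N k) i).
Proof.
case: (ltnP i N) => hi.
  apply: poly_ext (poly_lit (Ordinal hi)) => x.
  rewrite /sig /inp nth_cat size_map size_enum_ord hi.
  rewrite (nth_map (Ordinal hi)) ?size_enum_ord //.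
  congr (_ %:R); congr (_ \in x); apply: val_inj; rewrite /= nth_enum_ord //.
apply: poly_ext (poly_mono (leq0n 1)
   (poly_const (nth false (nseq (N - k) true ++ nseq k false) (i - N))%:R)) => x.
by rewrite /sig /inp (nth_cat false [seq _ \in x | _ <- _]) size_map size_enum_ord ltnNge hi.
Qed.

Local Close Scope ring_scope.

Lemma hD_lemma D : 0 < D -> 4 * (2 * D + 1) ^ 2 < (64 * D ^ 2).+1.
Proof. move=> h; nia. Qed.

Lemma final_arith T Cb A g e L N s D :
  e + g = T -> g <= A + D * Cb -> 2 * A = T + Cb -> e * L <= N * (s * T) ->
  Cb ^ 2 * N.+1 <= T * T -> 8 * N * s <= L -> 4 * (2 * D + 1) ^ 2 < N.+1 ->
  0 < L -> 0 < T -> False.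
Proof.
move=> h1 h2 h3 h4 hc hsl hD L0 T0.
have k1 : T <= (2 * D + 1) * Cb + 2 * e by lia.
have k2 : 2 * (2 * D + 1) * Cb < T.
  have : (2 * (2 * D + 1) * Cb) ^ 2 * N.+1 < T ^ 2 * N.+1.
    have -> : (2 * (2 * D + 1) * Cb) ^ 2 * N.+1 = (4 * (2 * D + 1) ^ 2) * (Cb ^ 2 * N.+1).
      by rewrite !expnMn; ring.
    have hm : 4 * (2 * D + 1) ^ 2 * (Cb ^ 2 * N.+1) <= 4 * (2 * D + 1) ^ 2 * (T * T).
      by apply: leq_mul.
    apply: leq_ltn_trans hm _.
    by rewrite mulnC (expnS T) expn1 ltn_pmul2l // muln_gt0 T0.
  by move=> h; rewrite ltn_pmul2r // ltn_exp2r // in h.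
have k3 : 8 * N * s * T <= L * T by rewrite leq_mul2r hsl orbT.
have k5 : T * L <= (2 * D + 1) * Cb * L + 2 * (e * L).
  by have := leq_mul k1 (leqnn L); rewrite mulnDl mulnA.
have k6 : 2 * (2 * D + 1) * Cb * L < T * L by rewrite ltn_pmul2r.
have k7 : 8 * (e * L) <= L * T.
  apply: leq_trans k3; move: h4; rewrite -!mulnA => h4.
  by rewrite leq_mul2l h4 orbT.
set a := T * L in k5 k6.
set b := (2 * D + 1) * Cb * L in k5 k6.
set c := e * L in k5 k7.
rewrite mulnC -/a in k7.
have : 2 * (2 * D + 1) * Cb * L = 2 * b by rewrite /b !mulnA.
lia.
Qed.


Theorem not_AC0_MAJ : ~ AC0 MAJ.
Proof.
move=> [C [c [d H]]].
have [l [l0 hl]] := params c d.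
set D := (2 * l) ^ d.
have D1 : 0 < D by rewrite expn_gt0 muln_gt0 l0.
set m := 32 * D ^ 2.
set N := m.*2.
have hN : N = 64 * D ^ 2 by rewrite /N /m -mul2n mulnA.
have [wf hs hdep hcorr] := H (N + N).
set Cc := C (N + N).
set s := size Cc.
have hsl : 8 * N * s <= 2 ^ l.
  apply: leq_trans hl; rewrite -/D -hN; apply: leq_mul => //.
  by apply: leq_trans hs _; rewrite addnn -mul2n.
have hX : #|{set 'I_N}| = 2 ^ N by rewrite card_setT_pow card_ord.
have acc : forall K, K <= N -> exists (Q : {set 'I_N} -> 'Z_3) (E : {set {set 'I_N}}),
   [/\ poly_le D Q, #|E| * 2 ^ l <= K * (s * 2 ^ N) &
       forall x, x \notin E ->
         Q x = (\sum_(k < K) 2 * (-1) ^+ k.+1 * (k < #|x|)%:R)%R].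
  elim => [|K IH] hK.
    exists (fun _ => 0%R), set0; split.
    - exact: poly_mono (leq0n _) (poly_const 0%R).
    - by rewrite cards0.
    - by move=> x _; rewrite big_ord0.
  have [Q [E [hQ hE hv]]] := IH (ltnW hK).
  have [p [E' [hp hE' hv']]] := approx_out (inp_poly N K) l0 hdep.
  rewrite hX -/s in hE'.
  exists (fun x => Q x + 2 * (-1) ^+ K.+1 * p x)%R, (E :|: E'); split.
  - exact: poly_add hQ (poly_scale _ hp).
  - apply: leq_trans (_ : (#|E| + #|E'|) * 2 ^ l <= _).
      by rewrite leq_mul2r cardsU leq_subr orbT.
    by rewrite mulnDl mulSn addnC; apply: leq_add.
  - move=> x; rewrite inE negb_or => /andP [xE xE'].
    rewrite big_ord_recr /= hv // hv' //; congr (_ + _)%R.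
    have hx : (K < #|x|) = circuit_out (inp N K x) Cc.
      have H1 := hcorr (inp N K x) (inp_size x (ltnW hK)).
      have H2 := inp_maj x hK.
      by apply/idP/idP => h; [apply/H1; apply/H2 | apply/H2; apply/H1].
    by rewrite hx.
have [Q [E [hQ hE hv]]] := acc N (leqnn N).
pose Q' := fun x => (1 + Q x)%R.
have hQ' : poly_le D Q'.
  by apply: poly_add hQ; exact: poly_mono (leq0n _) (poly_const _).
have hG : forall x, x \in ~: E -> chi setT x = Q' x.
  move=> x; rewrite inE => xE; rewrite chiT_val /Q' hv // alt_sum //.
  by have := max_card x; rewrite card_ord.
have hcount := count_G (represent (erefl N) hQ' hG).
have hb := Aset_bound m D.
have hh := Aset_half m.
have hc := central_bin m.
have hEc := cardsC E; rewrite hX in hEc.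
rewrite -/N in hb hh hc.
have h16 : 16 ^ m = 2 ^ N * 2 ^ N.
  by rewrite (_ : 16 = 2 ^ 4) // -expnM -expnD /N -addnn; congr (2 ^ _); lia.
rewrite h16 in hc.
have hD := hD_lemma D1; rewrite -hN in hD.
apply: (final_arith hEc (leq_trans hcount hb) hh hE hc hsl hD); by rewrite expn_gt0.
Qed.

End Part6.
Import Part6.

Module Part7.

Local Open Scope ring_scope.

Lemma fvalE x : fval x = (fint x)%:~R / 2 ^+ fexp x.
Proof.
rewrite /fval /fint /fden natrX; case: (fsgn x) => /=; first by rewrite mul1r.
by rewrite mulN1r mulrNz.
Qed.

Lemma int_sign_abs (z : int) :
  ((if (0 <= z)%R then 1 else -1) * (absz z)%:R : rat) = z%:~R.
Proof.
case: z => k /=; first by rewrite mul1r.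
by rewrite NegzE mulN1r mulrNz.
Qed.

Lemma two_pow_neq0 k : (2 ^+ k : rat) != 0.
Proof. by rewrite expf_neq0. Qed.

Lemma fint_abs (z : int) :
  (if (0 <= z)%R then Posz (absz z) else - Posz (absz z))%R = z.
Proof. by case: z => k //=; rewrite NegzE. Qed.

Lemma fadd_val x y : fval (fadd x y) = fval x + fval y.
Proof.
rewrite !fvalE /fadd /fint /= fint_abs -/(fint x) -/(fint y).
set e := maxn _ _.
rewrite intrD !intrM -!pmulrn !natrX.
have hx : (fexp x <= e)%N by rewrite leq_maxl.
have hy : (fexp y <= e)%N by rewrite leq_maxr.
have ex : (2 : rat) ^+ e = 2 ^+ (e - fexp x) * 2 ^+ fexp x by rewrite -exprD subnK.
have ey : (2 : rat) ^+ e = 2 ^+ (e - fexp y) * 2 ^+ fexp y by rewrite -exprD subnK.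
have n1 := two_pow_neq0 (e - fexp x); have n2 := two_pow_neq0 (e - fexp y).
have n3 := two_pow_neq0 (fexp x); have n4 := two_pow_neq0 (fexp y).
rewrite mulrDl {1}ex {1}ey; field.
by rewrite n1 n2 n3 n4.
Qed.

Lemma fmul_val x y : fval (fmul x y) = fval x * fval y.
Proof.
rewrite /fmul /fval /fden /= natrM expnD natrM.
case: (fsgn x); case: (fsgn y) => /=; rewrite ?mul1r ?mulN1r ?invfM; ring.
Qed.

Lemma fzero_val : fval fzero = 0.
Proof. by rewrite /fval /= mul0r. Qed.

Lemma foldl_fadd a s : fval (foldl fadd a s) = fval a + \sum_(y <- s) fval y.
Proof.
elim: s a => [|y s IH] a /=; first by rewrite big_nil addr0.
by rewrite IH fadd_val big_cons addrA.
Qed.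

Definition phiM (s : bool) (_ : nat) : vecF 1 := fun _ => Float s 1 0.
Definition scoreM (_ : nat) (_ : 'I_1) (_ _ : vecF 1) : float := fzero.
Definition actM (_ : nat) (_ : vecF 1) (bs : 'I_1 -> vecF 1) : vecF 1 := bs ord0.

Lemma sum_sign (s : seq bool) :
  \sum_(b <- s) (if b then 1 else -1 : rat) =
  (count_mem true s)%:R - (count_mem false s)%:R.
Proof.
elim: s => [|b s IH]; first by rewrite big_nil subrr.
rewrite big_cons IH /=; case: b => /=; rewrite ?add1n ?add0n ?natrD; ring.
Qed.

Lemma T_MAJ : T_sat_float MAJ.
Proof.
exists 1%N, 1%N, 1%N, phiM, scoreM, actM, (fun _ => 1), 0; split; [|split].
- exists 3%N, 0%N => x _; rewrite /vsize big_ord1 /emb_in_size /fsize /= /fden /=.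
  rewrite /bitlen expn0 (_ : trunc_log 2 1 = 0%N) //; lia.
- move=> l _; exists 1%N, 0%N => x _; rewrite /act_in_size /actM /= mul1n big_ord1.
  exact: leq_addl.
- move=> m w; rewrite big_ord1 mul1r addr0 /=.
  rewrite /layer /actM /attn_sum foldl_fadd fzero_val add0r big_map.
  set n := m.+1.
  have hset : sat_max_set (fun _ : 'I_n => fzero) = setT.
    by apply/setP => j; rewrite !inE; apply/forallP => j'.
  under eq_bigr => j _ do rewrite fmul_val /sat_weight hset in_setT cardsT card_ord.
  rewrite -big_distrr /= big_enum /=.
  set q := fval (finv_nat n).
  have q0 : 0 < q.
    rewrite /q /fval /= mul1r divr_gt0 // ?ltr0n ?expn_gt0 //.
    rewrite divn_gt0 //; apply: ltnW; exact: trunc_log_ltn.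
  have -> : \sum_(j < n) fval (phiM (tnth w j) j.+1 ord0) =
            \sum_(b <- w) (if b then 1 else -1 : rat).
    rewrite big_tuple; apply: eq_bigr => j _; rewrite /phiM /fval /= /fden /=.
    by case: (tnth w j); rewrite ?mul1r ?mulN1r ?divr1 // invr1 mulr1.
  rewrite sum_sign pmulr_rgt0 // subr_gt0 ltr_nat /MAJ size_tuple.
  by split => [h|[]].
Qed.

End Part7.
Import Part7.


Theorem proposition3 :
  ~ (forall Lang : seq bool -> Prop, T_sat_float Lang -> AC0 Lang) /\
  T_sat_float MAJ /\ ~ AC0 MAJ.
Proof.
split; first by move=> H; exact: not_AC0_MAJ (H _ T_MAJ).
by split; [exact: T_MAJ | exact: not_AC0_MAJ].
Qed.
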